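(* Grant (Lip-Conv) and (Conv), and let $\rho>0$. On the event $$\Omega'_K=\Big\{\forall f\in F\text{ with }P\mathcal L_f\le\rho,\ \exists J\subset\{1,\dots,K\},|J|>K/2,\ \forall k\in J:\ |(P_{B_k}-P)\mathcal L_f|\le\rho/4\Big\},$$ any minmax MOM estimator $\hat f\in\operatorname{argmin}_{f\in F}\sup_{g\in F}\mathrm{MOM}_K(\ell_f-\ell_g)$ satisfies $P\mathcal L_{\hat f}\le\rho$. (In the paper, $\rho=\bar r_2^2(\gamma)$.)
   Context: Setting: $\bar{\mathcal Y}\subset\mathbb R$ convex, $F\subset L_1(\mu)$ a class of measurable functions $\mathcal X\to\bar{\mathcal Y}$, $\bar\ell:\bar{\mathcal Y}\times\mathcal Y\to\mathbb R$, $\ell_f(x,y)=\bar\ell(f(x),y)$, $(X,Y)\sim P$, $X\sim\mu$, $Pg=\mathbb Eg(X,Y)$; $f^*$ unique minimizer of $f\mapsto P\ell_f$ over $F$, $\mathcal L_f=\ell_f-\ell_{f^*}$. (Lip-Conv): there is $L>0$ with $u\mapsto\bar\ell(u,y)$ convex and $L$-Lipschitz for all $y$. (Conv): $F$ convex. Data $(X_i,Y_i)_{i=1}^N$; $K$ divides $N$; blocks $B_1,\dots,B_K$ of size $N/K$ partition $\{1,\dots,N\}$; $P_{B_k}g=\frac KN\sum_{i\in B_k}g(X_i,Y_i)$; $\mathrm{MOM}_K(g)$ = median of $(P_{B_k}g)_k$. *)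

(* Defs.v *)
From Stdlib Require Import Reals Lra Lia List Arith.
Import ListNotations.
Open Scope R_scope.

(* ---------- Abstract expectation (integral) ------------------------------
   [Int] = the integrable functions on Z (here Z = X * Y, the law P of (X,Y)),
   [E] = the expectation P g = E g(X,Y). *)
Definition is_expectation {Z : Type} (Int : (Z -> R) -> Prop) (E : (Z -> R) -> R)
  : Prop :=
  Int (fun _ => 1) /\ E (fun _ => 1) = 1 /\
  (forall g h, Int g -> Int h -> Int (fun z => g z + h z)
               /\ E (fun z => g z + h z) = E g + E h) /\
  (forall c g, Int g -> Int (fun z => c * g z) /\ E (fun z => c * g z) = c * E g) /\
  (forall g, Int g -> Int (fun z => Rabs (g z))) /\
  (forall g h, Int g -> Int h -> (forall z, g z <= h z) -> E g <= E h).

Definition loss_of {X Y : Type} (lbar : R -> Y -> R) (f : X -> R) : X * Y -> R :=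
  fun z => lbar (f (fst z)) (snd z).

Definition excess {X Y : Type} (lbar : R -> Y -> R) (f fstar : X -> R) : X * Y -> R :=
  fun z => loss_of lbar f z - loss_of lbar fstar z.

Definition sumR (l : list nat) (a : nat -> R) : R := fold_right (fun i s => a i + s) 0 l.

Definition block (N : nat) (blk : nat -> nat) (k : nat) : list nat :=
  filter (fun i => Nat.eqb (blk i) k) (seq 0 N).

Definition is_block_partition (N K : nat) (blk : nat -> nat) : Prop :=
  (forall i, (i < N)%nat -> (blk i < K)%nat) /\
  (forall k, (k < K)%nat -> length (block N blk k) = (N / K)%nat).

Definition PB {Z : Type} (N K : nat) (blk : nat -> nat) (data : nat -> Z)
  (k : nat) (g : Z -> R) : R :=
  INR K / INR N * sumR (block N blk k) (fun i => g (data i)).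

Definition count_le (K : nat) (v : nat -> R) (t : R) : nat :=
  length (filter (fun k => if Rle_dec (v k) t then true else false) (seq 0 K)).

(* Empirical median of v 0, ..., v (K-1): the (lower) empirical 1/2-quantile
   inf { t | #{k : v k <= t} >= K/2 }, which is attained at some v k. *)
Definition median (K : nat) (v : nat -> R) : R :=
  match filter (fun k => Nat.leb K (2 * count_le K v (v k))) (seq 0 K) with
  | [] => 0
  | k0 :: ks => fold_right (fun k m => Rmin (v k) m) (v k0) ks
  end.

Definition MOM {Z : Type} (N K : nat) (blk : nat -> nat) (data : nat -> Z)
  (g : Z -> R) : R :=
  median K (fun k => PB N K blk data k g).

(* Main.v *)
Require Import Defs.
From Stdlib Require Import Reals List.
From Stdlib Require Import Lra Lia Arith FunctionalExtensionality.
Open Scope R_scope.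

Lemma sumR_le (l : list nat) (a b : nat -> R) :
  (forall i, a i <= b i) -> sumR l a <= sumR l b.
Proof. intros H; induction l; simpl; [lra|]. specialize (H a0); lra. Qed.

Lemma sumR_ext (l : list nat) (a b : nat -> R) :
  (forall i, a i = b i) -> sumR l a = sumR l b.
Proof. intros H; induction l; simpl; [lra|]. rewrite H, IHl; lra. Qed.

Lemma sumR_scal (l : list nat) (a : nat -> R) c :
  sumR l (fun i => c * a i) = c * sumR l a.
Proof. induction l; simpl; [ring|]. rewrite IHl; ring. Qed.

Lemma PB_le {Z} N K blk (data : nat -> Z) k (g h : Z -> R) : (0 < N)%nat ->
  (forall z, g z <= h z) -> PB N K blk data k g <= PB N K blk data k h.
Proof.
  intros HN H. unfold PB. apply Rmult_le_compat_l.
  - unfold Rdiv; apply Rmult_le_pos; [apply pos_INR|left; apply Rinv_0_lt_compat, lt_0_INR; lia].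
  - apply sumR_le; intros; apply H.
Qed.

Lemma PB_scal {Z} N K blk (data : nat -> Z) k (g h : Z -> R) a :
  (forall z, g z = a * h z) -> PB N K blk data k g = a * PB N K blk data k h.
Proof.
  intros H. unfold PB. rewrite (sumR_ext _ _ (fun i => a * h (data i))) by (intros; apply H).
  rewrite sumR_scal; ring.
Qed.

Lemma fold_min_le (v : nat -> R) k0 ks :
  forall k, In k (k0 :: ks) -> fold_right (fun k m => Rmin (v k) m) (v k0) ks <= v k.
Proof.
  induction ks as [|k1 ks IH]; intros k Hk; simpl in *.
  - destruct Hk as [<-|[]]; lra.
  - destruct Hk as [<-|[<-|Hk]].
    + eapply Rle_trans; [apply Rmin_r|]. apply IH; simpl; auto.
    + apply Rmin_l.
    + eapply Rle_trans; [apply Rmin_r|]. apply IH; simpl; auto.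
Qed.

Lemma fold_min_att (v : nat -> R) k0 ks :
  exists k, In k (k0 :: ks) /\ fold_right (fun k m => Rmin (v k) m) (v k0) ks = v k.
Proof.
  induction ks as [|k1 ks IH]; simpl.
  - exists k0; auto.
  - destruct IH as [k [Hk E]]. rewrite E. unfold Rmin. destruct (Rle_dec (v k1) (v k)).
    + exists k1; auto.
    + exists k; simpl in Hk; destruct Hk; auto.
Qed.

Definition Sset K v := filter (fun k => Nat.leb K (2 * count_le K v (v k))) (seq 0 K).

Lemma med_le K v k : In k (Sset K v) -> median K v <= v k.
Proof.
  unfold median; fold (Sset K v). destruct (Sset K v) as [|k0 ks]; [intros []|].
  apply fold_min_le.
Qed.

Lemma med_att K v : Sset K v <> nil -> exists k, In k (Sset K v) /\ median K v = v k.
Proof.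
  unfold median; fold (Sset K v). destruct (Sset K v) as [|k0 ks]; [congruence|].
  intros _; apply fold_min_att.
Qed.

Lemma argmax (l : list nat) (v : nat -> R) : l <> nil ->
  exists k, In k l /\ forall j, In j l -> v j <= v k.
Proof.
  induction l as [|a l IH]; [congruence|]. intros _.
  destruct l as [|b l].
  - exists a; split; [simpl; auto|]. intros j [<-|[]]; lra.
  - destruct IH as [k [Hk Hm]]; [congruence|].
    destruct (Rle_dec (v a) (v k)).
    + exists k; split; [simpl; auto|]. intros j [<-|Hj]; auto.
    + exists a; split; [simpl; auto|]. intros j [<-|Hj]; [lra|]. specialize (Hm j Hj); lra.
Qed.

Lemma count_ge K v (J : list nat) t : NoDup J -> (forall k, In k J -> (k < K)%nat) ->
  (forall k, In k J -> v k <= t) -> (length J <= count_le K v t)%nat.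
Proof.
  intros ND HJ Hv. unfold count_le. apply NoDup_incl_length; auto.
  intros j Hj. apply filter_In; split.
  - apply in_seq. specialize (HJ j Hj); lia.
  - destruct (Rle_dec (v j) t) as [r|n]; [reflexivity|]. exfalso; apply n, Hv, Hj.
Qed.

Lemma M1 K v (J : list nat) a : NoDup J -> (forall k, In k J -> (k < K)%nat) ->
  (K < 2 * length J)%nat -> (forall k, In k J -> v k <= a) -> median K v <= a.
Proof.
  intros ND HJ HL Hv.
  destruct (argmax J v) as [k [Hk Hm]]. { intros ->; simpl in HL; lia. }
  eapply Rle_trans; [apply med_le|apply Hv, Hk].
  unfold Sset; apply filter_In; split.
  - apply in_seq; specialize (HJ k Hk); lia.
  - apply Nat.leb_le. pose proof (count_ge K v J (v k) ND HJ Hm); lia.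
Qed.

Lemma M2 K v (J : list nat) a : (0 < K)%nat -> NoDup J -> (forall k, In k J -> (k < K)%nat) ->
  (K < 2 * length J)%nat -> (forall k, In k J -> a <= v k) -> a <= median K v.
Proof.
  intros HK ND HJ HL Hv.
  destruct (med_att K v) as [k0 [Hk0 Hm]].
  { destruct (argmax (seq 0 K) v) as [k [Hk Hmx]].
    { destruct K; [lia|simpl; congruence]. }
    intros E. assert (In k (Sset K v)); [|rewrite E in H; destruct H].
    unfold Sset; apply filter_In; split; auto. apply Nat.leb_le.
    assert (count_le K v (v k) = K); [|lia].
    unfold count_le. rewrite <- (length_seq K 0) at 2. f_equal.
    clear -Hmx. induction (seq 0 K) as [|b l IH]; simpl; auto.
    destruct (Rle_dec (v b) (v k)) as [_|n]; [f_equal; apply IH; intros; apply Hmx; simpl; auto|].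
    exfalso; apply n, Hmx; simpl; auto. }
  rewrite Hm. destruct (Rle_dec a (v k0)) as [r|n]; auto. exfalso.
  unfold Sset in Hk0; apply filter_In in Hk0 as [_ Hc]. apply Nat.leb_le in Hc.
  set (Fl := filter (fun k => if Rle_dec (v k) (v k0) then true else false) (seq 0 K)).
  assert (length (Fl ++ J) <= length (seq 0 K))%nat.
  { apply NoDup_incl_length.
    - apply NoDup_app; auto. apply NoDup_filter, seq_NoDup.
      intros x Hx HxJ. apply filter_In in Hx as [_ Hx]. destruct (Rle_dec (v x) (v k0)); [|discriminate].
      specialize (Hv x HxJ); lra.
    - intros x Hx. apply in_app_or in Hx as [Hx|Hx].
      + apply filter_In in Hx; tauto.
      + apply in_seq; specialize (HJ x Hx); lia. }
  rewrite length_app, length_seq in H. unfold count_le in Hc. fold Fl in Hc. lia.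
Qed.

Lemma lip_cont (h : R -> R) C : 0 <= C -> (forall t s, Rabs (h t - h s) <= C * Rabs (t - s)) ->
  continuity h.
Proof.
  intros HC H x eps Heps. exists (eps / (C + 1)). split.
  { apply Rdiv_lt_0_compat; lra. }
  intros y [_ Hy]. simpl in *. unfold Rdist in *.
  eapply Rle_lt_trans; [apply H|].
  assert (Rabs (y - x) * (C+1) < eps).
  { apply (Rmult_lt_compat_r (C+1)) in Hy; [|lra]. unfold Rdiv in Hy.
    rewrite Rmult_assoc, Rinv_l in Hy by lra. lra. }
  pose proof (Rabs_pos (y - x)). nra.
Qed.

Definition clamp (t : R) := Rmax 0 (Rmin 1 t).
Lemma clamp_lip t s : Rabs (clamp t - clamp s) <= Rabs (t - s).
Proof. unfold clamp, Rmax, Rmin, Rabs; repeat destruct Rle_dec; repeat destruct Rcase_abs; lra. Qed.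
Lemma clamp_range t : 0 <= clamp t <= 1.
Proof. unfold clamp, Rmax, Rmin; repeat destruct Rle_dec; lra. Qed.
Lemma clamp_id t : 0 <= t <= 1 -> clamp t = t.
Proof. unfold clamp, Rmax, Rmin; repeat destruct Rle_dec; lra. Qed.
Theorem lemma5
  (X Y : Type)
  (Int : (X * Y -> R) -> Prop) (E : (X * Y -> R) -> R)
  (HE : is_expectation Int E)
  (Ybar : R -> Prop)
  (HYbar : forall u v t, Ybar u -> Ybar v -> 0 <= t <= 1 -> Ybar (t * u + (1 - t) * v))
  (F : (X -> R) -> Prop)
  (HFval : forall f, F f -> forall x, Ybar (f x))
  (HFL1 : forall f, F f -> Int (fun z => f (fst z)))
  (lbar : R -> Y -> R)
  (Hloss_int : forall f, F f -> Int (loss_of lbar f))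
  (fstar : X -> R)
  (Hfstar : F fstar)
  (Hfstar_min : forall f, F f -> E (loss_of lbar fstar) <= E (loss_of lbar f))
  (Hfstar_uniq : forall f, F f -> E (loss_of lbar f) <= E (loss_of lbar fstar) -> f = fstar)
  (* (Lip-Conv) *)
  (L : R) (HL : 0 < L)
  (Hconvex : forall y u v t, Ybar u -> Ybar v -> 0 <= t <= 1 ->
     lbar (t * u + (1 - t) * v) y <= t * lbar u y + (1 - t) * lbar v y)
  (Hlip : forall y u v, Ybar u -> Ybar v -> Rabs (lbar u y - lbar v y) <= L * Rabs (u - v))
  (* (Conv) *)
  (HFconv : forall f g t, F f -> F g -> 0 <= t <= 1 ->
     F (fun x => t * f x + (1 - t) * g x))
  (* data and blocks *)
  (N K : nat) (HK : (0 < K)%nat) (HN : (0 < N)%nat) (HKN : Nat.divide K N)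
  (blk : nat -> nat) (Hblk : is_block_partition N K blk)
  (data : nat -> X * Y)
  (rho : R) (Hrho : 0 < rho)
  (* the event Omega'_K *)
  (Hevent : forall f, F f -> E (excess lbar f fstar) <= rho ->
     exists J : list nat, NoDup J /\ (forall k, In k J -> (k < K)%nat) /\
       (K < 2 * length J)%nat /\
       forall k, In k J ->
         Rabs (PB N K blk data k (excess lbar f fstar) - E (excess lbar f fstar)) <= rho / 4)
  (* fhat is a minmax MOM estimator:
     fhat in argmin_{f in F} sup_{g in F} MOM_K(l_f - l_g)  (sups in [-oo,+oo]) *)
  (fhat : X -> R) (Hfhat : F fhat)
  (Hargmin : forall f, F f -> forall M : R,
     (forall g, F g -> MOM N K blk data (fun z => loss_of lbar f z - loss_of lbar g z) <= M) ->
     (forall g, F g -> MOM N K blk data (fun z => loss_of lbar fhat z - loss_of lbar g z) <= M))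
  : E (excess lbar fhat fstar) <= rho.
Proof.
  destruct HE as (Hi1 & HE1 & Hadd & Hsc & Habs & Hmon).
  assert (Esub: forall g h, Int g -> Int h ->
            Int (fun z => g z - h z) /\ E (fun z => g z - h z) = E g - E h).
  { intros g h Hg Hh.
    replace (fun z => g z - h z) with (fun z => g z + (-1 * h z))
      by (apply functional_extensionality; intros; ring).
    destruct (Hsc (-1) h Hh) as [I1 E1]. destruct (Hadd g _ Hg I1) as [I2 E2].
    split; auto. rewrite E2, E1; ring. }
  assert (Ebnd: forall g h k, Int g -> Int h -> Int k ->
            (forall z, Rabs (g z - h z) <= k z) -> Rabs (E g - E h) <= E k).
  { intros g h k Hg Hh Hk Hz.
    destruct (Hadd h k Hh Hk) as [I1 E1]. destruct (Hadd g k Hg Hk) as [I2 E2].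
    assert (E g <= E h + E k).
    { rewrite <- E1. apply Hmon; auto. intros z; specialize (Hz z).
      unfold Rabs in Hz; destruct Rcase_abs; lra. }
    assert (E h <= E g + E k).
    { rewrite <- E2. apply Hmon; auto. intros z; specialize (Hz z).
      unfold Rabs in Hz; destruct Rcase_abs; lra. }
    unfold Rabs; destruct Rcase_abs; lra. }
  assert (Eex: forall g, F g -> E (excess lbar g fstar) = E (loss_of lbar g) - E (loss_of lbar fstar)).
  { intros g Hg. unfold excess. apply Esub; auto. }
  assert (A: forall f, F f -> E (excess lbar f fstar) > rho ->
     exists J : list nat, NoDup J /\ (forall k, In k J -> (k < K)%nat) /\
       (K < 2 * length J)%nat /\
       forall k, In k J -> 3 * rho / 4 <= PB N K blk data k (excess lbar f fstar)).
  { intros f Hf Hgt. rewrite Eex in Hgt by auto.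
    set (ft := fun t => fun x => clamp t * f x + (1 - clamp t) * fstar x).
    assert (Hft: forall t, F (ft t)) by (intros; apply HFconv; auto; apply clamp_range).
    set (D := fun z : X * Y => Rabs (f (fst z) - fstar (fst z))).
    assert (ID: Int D) by (apply Habs; apply Esub; auto).
    assert (ED: 0 <= E D).
    { destruct (Hsc 0 (fun _ => 1) Hi1) as [I0 E0].
      replace 0 with (E (fun _ : X * Y => 0 * 1)) by (rewrite E0; ring).
      apply Hmon; auto. intros z; unfold D. pose proof (Rabs_pos (f (fst z) - fstar (fst z))); lra. }
    set (psi := fun t => E (loss_of lbar (ft t)) - E (loss_of lbar fstar) - rho).
    assert (Hc: continuity psi).
    { apply (lip_cont _ (L * E D)); [apply Rmult_le_pos; lra|].
      intros t s.
      replace (psi t - psi s) with (E (loss_of lbar (ft t)) - E (loss_of lbar (ft s)))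
        by (unfold psi; ring).
      eapply Rle_trans; [apply (Ebnd _ _ (fun z => (L * Rabs (t - s)) * D z)); auto|].
      + apply Hsc; auto.
      + intros z. unfold loss_of. eapply Rle_trans; [apply Hlip; apply HFval; auto|].
        unfold ft, D.
        replace (clamp t * f (fst z) + (1 - clamp t) * fstar (fst z) -
                 (clamp s * f (fst z) + (1 - clamp s) * fstar (fst z)))
          with ((clamp t - clamp s) * (f (fst z) - fstar (fst z))) by ring.
        rewrite Rabs_mult. pose proof (clamp_lip t s).
        pose proof (Rabs_pos (f (fst z) - fstar (fst z))).
        pose proof (Rabs_pos (clamp t - clamp s)). cbv beta. rewrite Rmult_assoc. apply Rmult_le_compat_l; [lra|]. apply Rmult_le_compat_r; auto.
      + destruct (Hsc (L * Rabs (t - s)) D ID) as [_ ->]. right; ring. }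
    assert (E0: ft 0 = fstar).
    { apply functional_extensionality; intros; unfold ft; rewrite clamp_id by lra; ring. }
    assert (E1: ft 1 = f).
    { apply functional_extensionality; intros; unfold ft; rewrite clamp_id by lra; ring. }
    destruct (IVT psi 0 1 Hc) as [z [Hz Hpz]];
      [lra | unfold psi; rewrite E0; lra | unfold psi; rewrite E1; lra |].
    assert (Hz0: 0 < z).
    { destruct Hz as [[Hz|Hz] _]; auto. subst z. unfold psi in Hpz; rewrite E0 in Hpz; lra. }
    assert (Hcz: clamp z = z) by (apply clamp_id; lra).
    assert (Eq: E (excess lbar (ft z) fstar) = rho).
    { rewrite Eex by auto. unfold psi in Hpz; lra. }
    destruct (Hevent (ft z) (Hft z)) as [J (ND & HJ & HLJ & HB)]; [lra|].
    exists J; repeat split; auto. intros k Hk. specialize (HB k Hk). rewrite Eq in HB.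
    assert (PB N K blk data k (excess lbar (ft z) fstar) <= z * PB N K blk data k (excess lbar f fstar)).
    { rewrite <- (PB_scal N K blk data k (fun w => z * excess lbar f fstar w) (excess lbar f fstar) z)
        by (intros; reflexivity).
      apply PB_le; auto. intros w. unfold excess, loss_of.
      pose proof (Hconvex (snd w) (f (fst w)) (fstar (fst w)) (clamp z)
                    (HFval f Hf _) (HFval fstar Hfstar _) (clamp_range z)) as Hcv.
      unfold ft. rewrite Hcz in *. lra. }
    assert (3 * rho / 4 <= PB N K blk data k (excess lbar (ft z) fstar))
      by (unfold Rabs in HB; destruct Rcase_abs; lra).
    nra. }
  assert (Enn: forall g, F g -> 0 <= E (excess lbar g fstar)).
  { intros g Hg. rewrite Eex by auto. specialize (Hfstar_min g Hg); lra. }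
  destruct (Rle_or_lt (E (excess lbar fhat fstar)) rho) as [|Hgt]; auto. exfalso.
  assert (Hm: forall g, F g ->
     MOM N K blk data (fun z => loss_of lbar fstar z - loss_of lbar g z) <= rho / 4).
  { intros g Hg. unfold MOM. destruct (Rle_or_lt (E (excess lbar g fstar)) rho) as [Hle|Hlt].
    - destruct (Hevent g Hg Hle) as [J (ND & HJ & HLJ & HB)]. apply (M1 K _ J); auto.
      intros k Hk; specialize (HB k Hk); specialize (Enn g Hg).
      rewrite (PB_scal N K blk data k _ (excess lbar g fstar) (-1))
        by (intros; unfold excess; ring).
      unfold Rabs in HB; destruct Rcase_abs; lra.
    - destruct (A g Hg Hlt) as [J (ND & HJ & HLJ & HB)]. apply (M1 K _ J); auto.
      intros k Hk; specialize (HB k Hk).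
      rewrite (PB_scal N K blk data k _ (excess lbar g fstar) (-1))
        by (intros; unfold excess; ring).
      lra. }
  pose proof (Hargmin fstar Hfstar (rho / 4) Hm fstar Hfstar) as H1.
  destruct (A fhat Hfhat Hgt) as [J (ND & HJ & HLJ & HB)].
  pose proof (M2 K (fun k => PB N K blk data k (excess lbar fhat fstar)) J (3 * rho / 4) HK ND HJ HLJ HB).
  unfold MOM in H1. change (fun z => loss_of lbar fhat z - loss_of lbar fstar z)
    with (excess lbar fhat fstar) in H1. lra.
Qed.
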